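(* Let $M$ be a right $R$-module with $S=\mathrm{End}_R(M)$ such that $M$ is flat as a left $S$-module, and let $A$ be a right $R$-module. Then (i) $A\in\mathfrak{E}_M$ if and only if $\mathrm{Hom}_R(M,A)$ is an injective right $S$-module; (ii) $A\in\mathfrak{F}_M$ if and only if $\mathrm{Hom}_R(M,A)$ is an f-injective right $S$-module.
   Context: $\mathrm{Hom}_R(M,A)$ is a right $S$-module via composition. A module $N$ is $M$-generated if it is an epimorphic image of a direct sum of copies of $M$, and finitely $M$-generated if there is an epimorphism $M^{(n)}\to N$ for some integer $n>0$. $\mathfrak{E}_M$ (resp. $\mathfrak{F}_M$) is the class of right $R$-modules $A$ such that for every monomorphism $\alpha:N\to M$ with $N$ $M$-generated (resp. finitely $M$-generated) and every homomorphism $\beta:N\to A$ there is $\gamma:M\to A$ with $\beta=\gamma\alpha$. A right $S$-module $X$ is f-injective if every homomorphism from a finitely generated right ideal of $S$ to $X$ extends to $S$. *)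

(* Defs.v *)
(* Right modules over a ring R are modelled as left modules
   over the converse ring R^c (so  a *: x  in  lmodType R^c  means  x·a). *)
From HB Require Import structures.
From Stdlib Require List.
From mathcomp Require Import all_boot all_order all_algebra.
Set Implicit Arguments. Unset Strict Implicit. Unset Printing Implicit Defensive.
Import GRing.Theory.
Local Open Scope ring_scope.

Section Defs.
Variables (R : pzRingType).

(* finitely supported families  I -> M  (the elements of M^(I)) *)
Definition finsupp (I : Type) (M : zmodType) (f : I -> M) : Prop :=
  exists s : list I, forall i, ~ List.In i s -> f i = 0.

Definition epi_from_sum (M N : lmodType R^c) (I : Type) (p : (I -> M) -> N) : Prop :=
  (forall (a : R^c) (f g : I -> M), finsupp f -> finsupp g ->
      p (fun i => a *: f i + g i) = a *: p f + p g) /\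
  (forall n : N, exists2 f : I -> M, finsupp f & p f = n).

Definition M_generated (M N : lmodType R^c) : Prop :=
  exists (I : Type) (p : (I -> M) -> N), epi_from_sum p.

Definition fin_M_generated (M N : lmodType R^c) : Prop :=
  exists (n : nat) (p : ('I_n -> M) -> N), (0 < n)%N /\ epi_from_sum p.

Definition class_E (M A : lmodType R^c) : Prop :=
  forall (N : lmodType R^c) (alpha : N -> M) (beta : N -> A),
    M_generated M N -> linear alpha -> injective alpha -> linear beta ->
    exists gamma : M -> A, linear gamma /\ forall n, beta n = gamma (alpha n).

Definition class_F (M A : lmodType R^c) : Prop :=
  forall (N : lmodType R^c) (alpha : N -> M) (beta : N -> A),
    fin_M_generated M N -> linear alpha -> injective alpha -> linear beta ->
    exists gamma : M -> A, linear gamma /\ forall n, beta n = gamma (alpha n).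

(* act realizes S as End_R(M): a ring isomorphism S -> End_R(M); the
   left S-module structure of M is  s . m = act s m *)
Definition is_End (S : pzRingType) (M : lmodType R^c) (act : S -> M -> M) : Prop :=
  [/\ (forall s, linear (act s)),
      (forall m, act 1 m = m),
      (forall s t m, act (s * t) m = act s (act t m)),
      (forall s t m, act (s + t) m = act s m + act t m)
    & ((forall s t, (forall m, act s m = act t m) -> s = t) /\
       forall f : M -> M, linear f -> exists s, forall m, act s m = f m)].

Variables (S : pzRingType) (M : lmodType R^c) (act : S -> M -> M).

Definition balanced (X : lmodType S^c) (Z : zmodType) (b : X -> M -> Z) : Prop :=
  [/\ (forall x y m, b (x + y) m = b x m + b y m),
      (forall x m n, b x (m + n) = b x m + b x n)
    & (forall (s : S) x m, b ((s : S^c) *: x) m = b x (act s m))].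

(* the element  sum_i x_i (x) m_i  of X (x)_S M is zero (tested against the
   universal property of the tensor product) *)
Definition tensor_zero (X : lmodType S^c) (t : seq (X * M)) : Prop :=
  forall (Z : zmodType) (b : X -> M -> Z), balanced b ->
    \sum_(p <- t) b p.1 p.2 = 0.

(* M is flat as a left S-module: - (x)_S M preserves monomorphisms *)
Definition flat_left : Prop :=
  forall (X Y : lmodType S^c) (f : X -> Y), linear f -> injective f ->
    forall t : seq (X * M),
      tensor_zero [seq (f p.1, p.2) | p <- t] -> tensor_zero t.

Variable (A : lmodType R^c).

(* h : X -> Hom_R(M,A) is a right S-module homomorphism, for X a right
   S-module; the right S-action on Hom_R(M,A) is  (g . s) = g o act s *)
Definition SHom (X : lmodType S^c) (h : X -> M -> A) : Prop :=
  [/\ (forall x, linear (h x)),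
      (forall x y m, h (x + y) m = h x m + h y m)
    & (forall (s : S) x m, h ((s : S^c) *: x) m = h x (act s m))].

Definition Hom_injective : Prop :=
  forall (X Y : lmodType S^c) (g : X -> Y) (h : X -> M -> A),
    linear g -> injective g -> SHom h ->
    exists2 k : Y -> M -> A, SHom k & forall x m, k (g x) m = h x m.

Definition in_right_ideal (gens : seq S) (s : S) : Prop :=
  exists c : 'I_(size gens) -> S, s = \sum_(i < size gens) gens`_i * c i.

(* phi : I -> Hom_R(M,A) is a right S-module homomorphism on the right
   ideal I = P (phi given on elements of I) *)
Definition SHom_on (P : S -> Prop) (phi : S -> M -> A) : Prop :=
  [/\ (forall s, P s -> linear (phi s)),
      (forall s t m, P s -> P t -> phi (s + t) m = phi s m + phi t m)
    & (forall s t m, P s -> phi (s * t) m = phi s (act t m))].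

Definition Hom_f_injective : Prop :=
  forall (gens : seq S) (phi : S -> M -> A),
    SHom_on (in_right_ideal gens) phi ->
    exists2 psi : S -> M -> A, SHom_on (fun _ => True) psi &
      forall s m, in_right_ideal gens s -> psi s m = phi s m.

End Defs.

(* Main.v *)
Require Import Defs.
From HB Require Import structures.
From mathcomp Require Import all_boot all_order all_algebra.
From mathcomp Require Import boolp classical_sets.
Import GRing.Theory.
Local Open Scope ring_scope.
Set Implicit Arguments. Unset Strict Implicit.

Record submod (K : pzRingType) (V : lmodType K) := SubMod {
  smP : V -> Prop;
  sm0 : smP 0;
  smD : forall x y, smP x -> smP y -> smP (x + y);
  smZ : forall a x, smP x -> smP (a *: x) }.

Definition subT K V (Q : @submod K V) := {v : V | `[< smP Q v >]}.
HB.instance Definition _ K V Q := Choice.copy (@subT K V Q) {v : V | `[< smP Q v >]}.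
HB.instance Definition _ K V Q := SubType.copy (@subT K V Q) {v : V | `[< smP Q v >]}.

Section Ops.
Variables (K : pzRingType) (V : lmodType K) (Q : submod V).
Lemma smN (x : V) : smP Q x -> smP Q (- x).
Proof. by move=> h; rewrite -scaleN1r; apply: smZ. Qed.
Definition sz : subT Q := exist _ 0 (asboolT (sm0 Q)).
Definition sadd (x y : subT Q) : subT Q :=
  exist _ (val x + val y) (asboolT (smD (asboolW (valP x)) (asboolW (valP y)))).
Definition sopp (x : subT Q) : subT Q :=
  exist _ (- val x) (asboolT (smN (asboolW (valP x)))).
Definition sscale (a : K) (x : subT Q) : subT Q :=
  exist _ (a *: val x) (asboolT (smZ a (asboolW (valP x)))).
Lemma saddA : associative sadd. Proof. by move=> x y z; apply: val_inj; rewrite /= addrA. Qed.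
Lemma saddC : commutative sadd. Proof. by move=> x y; apply: val_inj; rewrite /= addrC. Qed.
Lemma sadd0 : left_id sz sadd. Proof. by move=> x; apply: val_inj; rewrite /= add0r. Qed.
Lemma saddN : left_inverse sz sopp sadd. Proof. by move=> x; apply: val_inj; rewrite /= addNr. Qed.
End Ops.
HB.instance Definition _ K V Q := GRing.isZmodule.Build (@subT K V Q) (@saddA K V Q) (@saddC K V Q) (@sadd0 K V Q) (@saddN K V Q).
Section Ops2.
Variables (K : pzRingType) (V : lmodType K) (Q : submod V).
Lemma sA a b (v : subT Q) : sscale a (sscale b v) = sscale (a * b) v.
Proof. by apply: val_inj; rewrite /= scalerA. Qed.
Lemma s1 : left_id 1 (@sscale K V Q). Proof. by move=> x; apply: val_inj; rewrite /= scale1r. Qed.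
Lemma sDr : right_distributive (@sscale K V Q) +%R. Proof. by move=> a x y; apply: val_inj; rewrite /= scalerDr. Qed.
Lemma sDl (v : subT Q) : {morph (fun a : K => sscale a v) : a b / a + b}. Proof. by move=> a b; apply: val_inj; rewrite /= scalerDl. Qed.
End Ops2.
HB.instance Definition _ K V Q := GRing.Zmodule_isLmodule.Build K (@subT K V Q) (@sA K V Q) (@s1 K V Q) (@sDr K V Q) (@sDl K V Q).


Section LinLemmas.
Variables (K : pzRingType) (V W : lmodType K) (f : V -> W) (hf : linear f).
Lemma lin0 : f 0 = 0.
Proof. have h := hf 1 0 0; rewrite !scale1r addr0 in h. by apply: (addrI (f 0)); rewrite addr0 -h. Qed.
Lemma linD x y : f (x + y) = f x + f y.
Proof. by have := hf 1 x y; rewrite !scale1r. Qed.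
Lemma linZ a x : f (a *: x) = a *: f x.
Proof. by have := hf a x 0; rewrite !addr0 lin0 addr0. Qed.
Lemma linN x : f (- x) = - f x.
Proof. by rewrite -scaleN1r linZ scaleN1r. Qed.
Lemma linB x y : f (x - y) = f x - f y.
Proof. by rewrite linD linN. Qed.
Lemma lin_sum (I : Type) (r : seq I) (F : I -> V) : f (\sum_(i <- r) F i) = \sum_(i <- r) f (F i).
Proof. elim: r => [|i r IH]; by rewrite ?big_nil ?lin0 // !big_cons linD IH. Qed.
End LinLemmas.

Section Vals.
Variables (K : pzRingType) (V : lmodType K) (Q : submod V).
Lemma val_add (x y : subT Q) : val (x + y) = val x + val y. Proof. by []. Qed.
Lemma val_scale a (x : subT Q) : val (a *: x) = a *: val x. Proof. by []. Qed.
Lemma val_zero : val (0 : subT Q) = 0. Proof. by []. Qed.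
End Vals.

Section Ring.
Variables (S : pzRingType).
Lemma regZ (a : S^c) (x : (S^c)^o) : a *: x = ((x : S) * (a : S) : S). Proof. by []. Qed.

Lemma ideal0 (gens : seq S) : in_right_ideal gens 0.
Proof. by exists (fun _ => 0); rewrite big1 // => i _; rewrite mulr0. Qed.
Lemma idealD (gens : seq S) s t : in_right_ideal gens s -> in_right_ideal gens t -> in_right_ideal gens (s + t).
Proof.
move=> [c ->] [d ->]; exists (fun i => c i + d i).
by rewrite -big_split /=; apply: eq_bigr => i _; rewrite mulrDr.
Qed.
Lemma idealM (gens : seq S) s t : in_right_ideal gens s -> in_right_ideal gens (s * t).
Proof.
move=> [c ->]; exists (fun i => c i * t).
by rewrite mulr_suml; apply: eq_bigr => i _; rewrite mulrA.
Qed.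
Lemma ideal_nth (gens : seq S) (k : 'I_(size gens)) : in_right_ideal gens gens`_k.
Proof.
exists (fun i => if i == k then 1 else 0).
rewrite (bigD1 k) //= eqxx mulr1 big1 ?addr0 // => i /negPf ->; by rewrite mulr0.
Qed.
Lemma ideal_mem (gens : seq S) x : x \in gens -> in_right_ideal gens x.
Proof.
move=> hx; have hk : (index x gens < size gens)%N by rewrite index_mem.
by have := ideal_nth (Ordinal hk); rewrite /= nth_index.
Qed.

Definition idealQ (gens : seq S) : submod (S^c)^o.
Proof.
refine (@SubMod (S^c) ((S^c)^o) (in_right_ideal gens : (S^c)^o -> Prop) (ideal0 gens) (@idealD gens) _).
by move=> a x hx; rewrite regZ; apply: idealM.
Defined.
Lemma idealP gens (x : subT (idealQ gens)) : in_right_ideal gens (val x).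
Proof. exact: (asboolW (valP x)). Qed.
End Ring.

Section Main.
Variables (R S : pzRingType) (M A : lmodType R^c) (act : S -> M -> M).
Hypothesis hE : is_End act.

Lemma act_lin s : linear (act s). Proof. by case: hE. Qed.
Lemma act1 m : act 1 m = m. Proof. by case: hE. Qed.
Lemma actM s t m : act (s * t) m = act s (act t m). Proof. by case: hE. Qed.
Lemma actD s t m : act (s + t) m = act s m + act t m. Proof. by case: hE. Qed.
Lemma act_surj (f : M -> M) : linear f -> exists s, forall m, act s m = f m.
Proof. by case: hE => _ _ _ _ [_]; apply. Qed.
Lemma act0s m : act 0 m = 0.
Proof. by apply: (addrI (act 0 m)); rewrite -actD !addr0. Qed.
Lemma actNs s m : act (- s) m = - act s m.
Proof. by apply: (addrI (act s m)); rewrite -actD !subrr act0s. Qed.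
Lemma actBs s t m : act (s - t) m = act s m - act t m.
Proof. by rewrite actD actNs. Qed.
Lemma act_sums (I : Type) (r : seq I) (F : I -> S) m :
  act (\sum_(i <- r) F i) m = \sum_(i <- r) act (F i) m.
Proof. elim: r => [|i r IH]; by rewrite ?big_nil ?act0s // !big_cons actD IH. Qed.

Lemma bsum (X : lmodType S^c) (Z : zmodType) (b : X -> M -> Z) x (I : Type) (r : seq I) F :
  (forall x m n, b x (m + n) = b x m + b x n) ->
  b x (\sum_(i <- r) F i) = \sum_(i <- r) b x (F i).
Proof.
move=> bD.
have b0 : b x 0 = 0 by apply: (addrI (b x 0)); rewrite -bD !addr0.
elim: r => [|i r IH]; by rewrite ?big_nil ?b0 // !big_cons bD IH.
Qed.

Lemma tzS (t : seq ((S^c)^o * M)) : \sum_(p <- t) act p.1 p.2 = 0 -> tensor_zero act t.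
Proof.
move=> h Z b [bD1 bD2 bZ].
have e : forall x m, b x m = b 1 (act x m).
  move=> x m; rewrite -bZ; congr b; by rewrite regZ mul1r.
under eq_bigr do rewrite e.
by rewrite -bsum // h; apply: (addrI (b 1 0)); rewrite -bD2 !addr0.
Qed.

Hypothesis hflat : flat_left act.

Lemma flat_phi (P : S -> Prop) (phi : S -> M -> A) (hP : SHom_on act P phi)
  (gens : seq S) (hg : forall s, in_right_ideal gens s -> P s) (r : seq (S * M)) :
  (forall p, p \in r -> in_right_ideal gens p.1) ->
  \sum_(p <- r) act p.1 p.2 = 0 -> \sum_(p <- r) phi p.1 p.2 = 0.
Proof.
move=> hr h0.
pose X := subT (idealQ gens).
pose io (s : S) : X := if pselect (in_right_ideal gens s) is left h then exist _ s (asboolT h) else 0.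
have ioE s : in_right_ideal gens s -> val (io s) = s.
  by rewrite /io; case: pselect.
pose t := [seq (io p.1, p.2) | p <- r].
have hv : linear (val : X -> (S^c)^o) by [].
have := @hflat X _ (val : X -> (S^c)^o) hv val_inj t.
have tz : tensor_zero act [seq ((val : X -> (S^c)^o) p.1, p.2) | p <- t].
  apply: tzS; rewrite /t -map_comp big_map /=.
  transitivity (\sum_(p <- r) act p.1 p.2); last exact: h0.
  by apply: eq_big_seq => p /hr /ioE ->.
move/(_ tz) => tzt.
have bal : balanced act (fun (x : X) (m : M) => phi (val x) m : A).
  case: hP => hl hd hm; split.
  - move=> x y m /=; apply: hd; apply: hg; exact: idealP.
  - move=> x m n /=; apply: linD; apply: hl; apply: hg; exact: idealP.
  - move=> s x m /=; rewrite regZ; apply: hm; apply: hg; exact: idealP.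
have := tzt A _ bal; rewrite /t big_map /=.
by move=> h1; rewrite -[X in _ = X]h1; apply: eq_big_seq => p /hr /ioE ->.
Qed.

Lemma In_mem (T : eqType) (x : T) (s : seq T) : List.In x s -> x \in s.
Proof. elim: s => //= y s IH [->|/IH h]; rewrite in_cons ?eqxx ?h ?orbT //. Qed.

Section Core.
Variables (J : S -> Prop) (J0 : J 0) (JD : forall s t, J s -> J t -> J (s + t))
  (JMul : forall s t, J s -> J (s * t)).
Variables (phi : S -> M -> A) (hphi : SHom_on act J phi).

Definition Jlist (r : seq (S * M)) := forall p, p \in r -> J p.1.
Definition inJM (x : M) := exists r, Jlist r /\ x = \sum_(p <- r) act p.1 p.2.

Lemma phi_lin s : J s -> linear (phi s). Proof. by case: hphi => h _ _; apply: h. Qed.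

Definition JMQ : submod M.
Proof.
refine (@SubMod _ _ inJM _ _ _).
- by exists [::]; split => [p|]; rewrite ?big_nil.
- move=> x y [r1 [h1 ->]] [r2 [h2 ->]]; exists (r1 ++ r2); split; last by rewrite big_cat.
  by move=> p; rewrite mem_cat => /orP[/h1|/h2].
- move=> a x [r [h ->]]; exists [seq (p.1, a *: p.2) | p <- r]; split.
    by move=> p /mapP[q /h hq ->].
  by rewrite big_map scaler_sumr; apply: eq_bigr => p _; rewrite linZ //; apply: act_lin.
Defined.

Definition NJ := subT JMQ.
Lemma NJP (x : NJ) : inJM (val x). Proof. exact: (asboolW (valP x)). Qed.
Definition rep (x : NJ) : seq (S * M) := projT1 (cid (NJP x)).
Lemma repP x : Jlist (rep x) /\ val x = \sum_(p <- rep x) act p.1 p.2.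
Proof. exact: (projT2 (cid (NJP x))). Qed.
Definition betaJ (x : NJ) : A := \sum_(p <- rep x) phi p.1 p.2.

Lemma Jsum (I : Type) (r : seq I) (F : I -> S) : (forall i, J (F i)) -> J (\sum_(i <- r) F i).
Proof. by move=> h; apply: big_ind. Qed.

Lemma WD0 r : Jlist r -> \sum_(p <- r) act p.1 p.2 = 0 -> \sum_(p <- r) phi p.1 p.2 = 0.
Proof.
move=> hr h0.
apply: (@flat_phi J phi hphi (map fst r)) => //.
- move=> s [c ->]; apply: Jsum => i; apply: JMul.
  have : (map fst r)`_i \in map fst r by apply: mem_nth; rewrite ltn_ord.
  by case/mapP => p /hr hp ->.
- by move=> p hp; apply: ideal_mem; apply: map_f.
Qed.

Lemma WD r1 r2 : Jlist r1 -> Jlist r2 ->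
  \sum_(p <- r1) act p.1 p.2 = \sum_(p <- r2) act p.1 p.2 ->
  \sum_(p <- r1) phi p.1 p.2 = \sum_(p <- r2) phi p.1 p.2.
Proof.
move=> h1 h2 he; apply/eqP; rewrite -subr_eq0; apply/eqP.
have := @WD0 (r1 ++ [seq (p.1, - p.2) | p <- r2]).
rewrite !big_cat !big_map /=.
have e1 : \sum_(p <- r2) act p.1 (- p.2) = - \sum_(p <- r2) act p.1 p.2.
  by rewrite -sumrN; apply: eq_bigr => p _; rewrite linN //; apply: act_lin.
have e2 : \sum_(p <- r2) phi p.1 (- p.2) = - \sum_(p <- r2) phi p.1 p.2.
  by rewrite -sumrN; apply: eq_big_seq => p /h2 hp; rewrite linN //; apply: phi_lin.
rewrite e1 e2; apply.
  by move=> p; rewrite mem_cat => /orP[/h1 //|/mapP[q /h2 hq ->]].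
by rewrite he subrr.
Qed.

Lemma betaE (x : NJ) r : Jlist r -> val x = \sum_(p <- r) act p.1 p.2 ->
  betaJ x = \sum_(p <- r) phi p.1 p.2.
Proof. move=> hr he; case: (repP x) => h1 h2; apply: WD => //; by rewrite -h2. Qed.

Lemma betaJ_lin : linear betaJ.
Proof.
move=> a x y.
case: (repP x) => hx ex; case: (repP y) => hy ey.
rewrite (@betaE _ ([seq (p.1, a *: p.2) | p <- rep x] ++ rep y)).
- rewrite big_cat big_map /= /betaJ scaler_sumr; congr (_ + _).
  by apply: eq_big_seq => p /hx hp; rewrite linZ //; apply: phi_lin.
- by move=> p; rewrite mem_cat => /orP[/mapP[q /hx hq ->]|/hy].
- transitivity (a *: val x + val y); first by [].
  rewrite big_cat big_map /= ex ey scaler_sumr; congr (_ + _).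
  by apply: eq_bigr => p _; rewrite linZ //; apply: act_lin.
Qed.

Lemma actJM s m : J s -> inJM (act s m).
Proof. by move=> hs; exists [:: (s, m)]; split; [move=> p; rewrite inE => /eqP -> | rewrite big_seq1]. Qed.

Lemma core_of_ext : (exists g : M -> A, linear g /\ forall x : NJ, betaJ x = g (val x)) ->
  exists g : M -> A, linear g /\ forall s m, J s -> phi s m = g (act s m).
Proof.
move=> [g [hg he]]; exists g; split => // s m hs.
pose x : NJ := exist _ (act s m) (asboolT (actJM m hs)).
have := he x; rewrite (@betaE x [:: (s, m)]) ?big_seq1 //.
by move=> p; rewrite inE => /eqP ->.
Qed.

End Core.

Lemma In_memP (T : eqType) (x : T) (s : seq T) : List.In x s <-> x \in s.
Proof.
split; first exact: In_mem.
elim: s => //= y s IH; rewrite in_cons => /orP[/eqP ->|/IH]; by [left|right].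
Qed.

Section Gen.
Variables (J : S -> Prop) (J0 : J 0).
Let I := {s : S | `[< J s >]}.
Definition Fs (f : I -> M) (s : seq I) : M := \sum_(i <- undup s) act (val i) (f i).
Definition supp (f : I -> M) : seq I :=
  match pselect (finsupp f) with left h => projT1 (cid h) | right _ => [::] end.
Lemma suppP f : finsupp f -> forall i, ~ List.In i (supp f) -> f i = 0.
Proof. by rewrite /supp; case: pselect => // h _; exact: (projT2 (cid h)). Qed.

Lemma Fs_ext f s s' : (forall i, ~ List.In i s -> f i = 0) -> Fs f (s ++ s') = Fs f s.
Proof.
move=> hs; rewrite /Fs.
rewrite (bigID (fun i => i \in s)) /= [X in _ + X]big1_seq ?addr0; last first.
  move=> i /andP[hn _]; have -> : f i = 0.
    by apply: hs => /In_memP h; move/negP: hn.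
  exact: (lin0 (act_lin _)).
rewrite -big_filter; apply: perm_big; apply: uniq_perm.
- by apply: filter_uniq; apply: undup_uniq.
- exact: undup_uniq.
- by move=> i; rewrite mem_filter !mem_undup mem_cat; case: (i \in s).
Qed.

Lemma Fs_cov f s s' : (forall i, ~ List.In i s -> f i = 0) -> (forall i, ~ List.In i s' -> f i = 0) ->
  Fs f s = Fs f s'.
Proof.
move=> hs hs'; rewrite -(@Fs_ext f s s') // -(@Fs_ext f s' s) //.
rewrite /Fs; apply: perm_big; apply: uniq_perm; try exact: undup_uniq.
by move=> i; rewrite !mem_undup !mem_cat orbC.
Qed.

Lemma FsJ f s : inJM J (Fs f s).
Proof.
exists [seq (val i, f i) | i <- undup s]; split; last by rewrite big_map.
by move=> p /mapP[i _ ->]; exact: (asboolW (valP i)).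
Qed.

Definition pgen (f : I -> M) : NJ J := exist _ (Fs f (supp f)) (asboolT (FsJ f (supp f))).

Lemma not_In_app (T : Type) (x : T) s s' : ~ List.In x (s ++ s') -> ~ List.In x s /\ ~ List.In x s'.
Proof. by move=> h; split => h'; apply: h; apply: List.in_or_app; [left|right]. Qed.

Lemma gen_NJ : M_generated M (NJ J).
Proof.
exists I, pgen; split.
- move=> a f g hf hg; apply: val_inj.
  transitivity (a *: val (pgen f) + val (pgen g)); last by [].
  set h := fun i => a *: f i + g i.
  have hsf := suppP hf; have hsg := suppP hg.
  have vf : forall i, ~ List.In i (supp f ++ supp g) -> f i = 0.
    by move=> i hi; case: (not_In_app hi) => h1 _; exact: hsf.
  have vg : forall i, ~ List.In i (supp f ++ supp g) -> g i = 0.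
    by move=> i hi; case: (not_In_app hi) => _ h2; exact: hsg.
  have vh : forall i, ~ List.In i (supp f ++ supp g) -> h i = 0.
    by move=> i hi; rewrite /h vf // vg // scaler0 addr0.
  have hh : finsupp h by exists (supp f ++ supp g).
  rewrite /= (@Fs_cov h (supp h) (supp f ++ supp g)) //; last exact: suppP.
  rewrite (@Fs_cov f (supp f) (supp f ++ supp g)) // (@Fs_cov g (supp g) (supp f ++ supp g)) //.
  rewrite /Fs scaler_sumr -big_split /=; apply: eq_bigr => i _.
  by rewrite /h (linD (act_lin _)) (linZ (act_lin _)).
- move=> n.
  case: (repP n) => hr er.
  pose i0 : I := exist _ 0 (asboolT J0).
  pose io (s : S) : I := if pselect (J s) is left h then exist _ s (asboolT h) else i0.
  have ioE p : p \in rep n -> val (io p.1) = p.1.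
    by move=> /hr hp; rewrite /io; case: pselect.
  pose f (i : I) := \sum_(p <- rep n) (if p.1 == val i then p.2 else 0).
  pose s := [seq io p.1 | p <- rep n].
  have vf : forall i, ~ List.In i s -> f i = 0.
    move=> i hi; rewrite /f big1_seq // => p /andP[_ hp].
    case: eqP => // e; exfalso; apply: hi; apply/In_memP.
    have -> : i = io p.1 by apply: val_inj; rewrite ioE.
    exact: map_f.
  have hf : finsupp f by exists s.
  exists f => //; apply: val_inj.
  rewrite /= (@Fs_cov f (supp f) s) //; last exact: suppP.
  rewrite er /Fs.
  transitivity (\sum_(i <- undup s) \sum_(p <- rep n) (if p.1 == val i then act p.1 p.2 else 0)).
    apply: eq_bigr => i _; rewrite /f (lin_sum (act_lin _)); apply: eq_bigr => p _.
    by case: eqP => [->|_]; rewrite ?(lin0 (act_lin _)).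
  rewrite exchange_big /=; apply: eq_big_seq => p hp.
  rewrite -big_mkcond /=.
  rewrite (eq_bigl (fun i => i == io p.1)); last first.
    move=> i; apply/eqP/eqP => [e|->]; last by rewrite ioE.
    by apply: val_inj; rewrite ioE.
  rewrite -big_filter filter_pred1_uniq ?big_seq1 //; first exact: undup_uniq.
  by rewrite mem_undup; apply: map_f.
Qed.
End Gen.

Section GenF.
Variables (gens : seq S).
Let n := size gens.
Let J := in_right_ideal gens.
Lemma FgJ (f : 'I_n -> M) : inJM J (\sum_(k < n) act gens`_k (f k)).
Proof.
exists [seq (gens`_k, f k) | k : 'I_n <- index_enum 'I_n]; split; last by rewrite big_map.
by move=> p /mapP[k _ ->]; exact: ideal_nth.
Qed.
Definition pgenF (f : 'I_n -> M) : NJ J := exist _ (\sum_(k < n) act gens`_k (f k)) (asboolT (FgJ f)).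

Lemma gen_NJF : (0 < n)%N -> fin_M_generated M (NJ J).
Proof.
move=> hn; exists n, pgenF; split => //; split.
- move=> a f g _ _; apply: val_inj.
  transitivity (a *: val (pgenF f) + val (pgenF g)); last by [].
  rewrite /= scaler_sumr -big_split /=; apply: eq_bigr => k _.
  by rewrite (linD (act_lin _)) (linZ (act_lin _)).
- move=> x; case: (repP x) => hr er.
  pose coef (s : S) : 'I_n -> S :=
    if pselect (J s) is left h then projT1 (cid h) else fun _ => 0.
  have coefE s : J s -> s = \sum_(k < n) gens`_k * coef s k.
    by rewrite /coef; case: pselect => // h _; exact: (projT2 (cid h)).
  pose f (k : 'I_n) := \sum_(p <- rep x) act (coef p.1 k) p.2.
  exists f => //.
    by exists (enum 'I_n) => i hi; exfalso; apply: hi; apply/In_memP; rewrite mem_enum.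
  apply: val_inj; rewrite /= er.
  transitivity (\sum_(k < n) \sum_(p <- rep x) act (gens`_k * coef p.1 k) p.2).
    apply: eq_bigr => k _; rewrite /f (lin_sum (act_lin _)); apply: eq_bigr => p _.
    by rewrite actM.
  rewrite exchange_big /=; apply: eq_big_seq => p /hr hp.
  by rewrite [in RHS](coefE _ hp) act_sums.
Qed.
End GenF.

Lemma extE (hcE : class_E M A) (J : S -> Prop) (J0 : J 0)
  (JD : forall s t, J s -> J t -> J (s + t)) (JMul : forall s t, J s -> J (s * t))
  (phi : S -> M -> A) (hphi : SHom_on act J phi) :
  exists g : M -> A, linear g /\ forall s m, J s -> phi s m = g (act s m).
Proof.
apply: (core_of_ext J0 JD JMul hphi).
apply: (hcE _ (val : NJ J -> M) (betaJ phi)) => //.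
- exact: gen_NJ.
- exact: val_inj.
- exact: betaJ_lin.
Qed.

Lemma extF (hcF : class_F M A) (gens : seq S) (hn : (0 < size gens)%N)
  (phi : S -> M -> A) (hphi : SHom_on act (in_right_ideal gens) phi) :
  exists g : M -> A, linear g /\ forall s m, in_right_ideal gens s -> phi s m = g (act s m).
Proof.
apply: (core_of_ext (ideal0 gens) (@idealD _ gens) (@idealM _ gens) hphi).
apply: (hcF _ (val : NJ (in_right_ideal gens) -> M) (betaJ phi)) => //.
- exact: gen_NJF.
- exact: val_inj.
- exact: (betaJ_lin (ideal0 gens) (@idealD _ gens) (@idealM _ gens) hphi).
Qed.

Definition delta (I : Type) (i : I) (m : M) : I -> M :=
  fun j => if pselect (j = i) then m else 0.

Section Back.
Variables (N : lmodType R^c) (alpha : N -> M) (beta : N -> A)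
  (hal : linear alpha) (hinj : injective alpha) (hbe : linear beta).

Lemma epiD (I : Type) (p : (I -> M) -> N) (hp : epi_from_sum p) f g :
  finsupp f -> finsupp g -> p (fun i => f i + g i) = p f + p g.
Proof.
case: hp => hl _ hf hg; transitivity (1 *: p f + p g); last by rewrite scale1r.
rewrite -(hl 1 f g hf hg); congr p.
by apply: funext => i; rewrite scale1r.
Qed.

Lemma epi0 (I : Type) (p : (I -> M) -> N) (hp : epi_from_sum p) : p (fun _ => 0) = 0.
Proof.
have h0 : finsupp (fun _ : I => (0 : M)) by exists [::].
have := epiD hp h0 h0.
have -> : (fun _ : I => (0 : M) + 0) = (fun _ => 0) by apply: funext => i; rewrite addr0.
by move=> h; apply: (addrI (p (fun _ => 0))); rewrite -h addr0.
Qed.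

Lemma decomp (I : Type) (p : (I -> M) -> N) (hp : epi_from_sum p) (f : I -> M) : finsupp f ->
  exists r : seq (I * M), p f = \sum_(x <- r) p (delta x.1 x.2).
Proof.
case=> s; elim: s f => [|i s IH] f hf.
  exists [::]; rewrite big_nil -(epi0 hp); congr p; apply: funext => j; exact: hf.
pose f' := fun j => if pselect (j = i) then 0 else f j.
have hf' : forall j, ~ List.In j s -> f' j = 0.
  move=> j hj; rewrite /f'; case: pselect => // ne; apply: hf => /= [[e|//]].
  by apply: ne.
have [r' er'] := IH f' hf'.
exists ((i, f i) :: r'); rewrite big_cons /= -er' -epiD //.
- congr p; apply: funext => j; rewrite /delta /f'; destruct (pselect (j = i)) as [e|ne].
    by subst j; rewrite /= addr0.
  by rewrite /= add0r.
- by exists [:: i] => j hj; rewrite /delta; case: pselect => // e; exfalso; apply: hj; left.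
- by exists s.
Qed.

Lemma delta_fs (I : Type) (i : I) m : finsupp (delta i m).
Proof. by exists [:: i] => j hj; rewrite /delta; case: pselect => // e; exfalso; apply: hj; left. Qed.

Lemma sigma_ex (I : Type) (p : (I -> M) -> N) (hp : epi_from_sum p) :
  exists sigma : I -> S, forall i m, act (sigma i) m = alpha (p (delta i m)).
Proof.
have dlin : forall i, linear (fun m => alpha (p (delta i m))).
  move=> i a u v /=; case: hp => hl _.
  transitivity (alpha (a *: p (delta i u) + p (delta i v))); last exact: hal.
  congr alpha; rewrite -hl; try exact: delta_fs.
  have -> : delta i (a *: u + v) = (fun j => a *: delta i u j + delta i v j) => //.
  apply: funext => j.
  by rewrite /delta; destruct (pselect (j = i)); rewrite /= ?scaler0 ?addr0.
exists (fun i => projT1 (cid (act_surj (dlin i)))) => i m.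
exact: (projT2 (cid (act_surj (dlin i)))).
Qed.

Lemma decomp_ext (I : Type) (p : (I -> M) -> N) (hp : epi_from_sum p) (sigma : I -> S)
  (hs : forall i m, act (sigma i) m = alpha (p (delta i m))) (g : M -> A) (hg : linear g) :
  (forall i m, g (act (sigma i) m) = beta (p (delta i m))) -> forall n, beta n = g (alpha n).
Proof.
move=> hgs n; case: hp => [hl hsur]; have [f hf <-] := hsur n.
have [r ->] := decomp (conj hl hsur) hf.
rewrite (lin_sum hbe) (lin_sum hal) (lin_sum hg); apply: eq_bigr => x _.
by rewrite -hs hgs.
Qed.

Definition Img (y : M) := exists n, alpha n = y.
Definition ainv (y : M) : N := if pselect (Img y) is left h then projT1 (cid h) else 0.
Lemma ainvK y : Img y -> alpha (ainv y) = y.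
Proof. by rewrite /ainv; case: pselect => // h _; exact: (projT2 (cid h)). Qed.
Lemma ainvE n : ainv (alpha n) = n.
Proof. by apply: hinj; rewrite ainvK //; exists n. Qed.
Lemma ImgD y z : Img y -> Img z -> Img (y + z).
Proof. by move=> [n1 <-] [n2 <-]; exists (n1 + n2); rewrite (linD hal). Qed.
Lemma ImgZ a y : Img y -> Img (a *: y).
Proof. by move=> [n1 <-]; exists (a *: n1); rewrite (linZ hal). Qed.
Lemma Img0 : Img 0. Proof. by exists 0; rewrite (lin0 hal). Qed.
Lemma ainv_lin a y z : Img y -> Img z -> ainv (a *: y + z) = a *: ainv y + ainv z.
Proof. by move=> [n1 <-] [n2 <-]; rewrite -hal !ainvE. Qed.
Lemma ainvD y z : Img y -> Img z -> ainv (y + z) = ainv y + ainv z.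
Proof. by move=> hy hz; rewrite -{1}(scale1r y) ainv_lin // scale1r. Qed.

End Back.

Lemma fb : Hom_f_injective act A -> class_F M A.
Proof.
move=> hfi N alpha beta [n [p [hn hp]]] hal hinj hbe.
have [sigma hs] := sigma_ex hal hp.
pose gens := [seq sigma i | i <- enum 'I_n].
have hImg x m : x \in gens -> Img alpha (act x m).
  by case/mapP => i _ ->; rewrite hs; exists (p (delta i m)).
have hImgI s m : in_right_ideal gens s -> Img alpha (act s m).
  move=> [c ->]; rewrite act_sums; apply: big_ind.
  - exact: (Img0 hal).
  - exact: (ImgD hal).
  - by move=> k _; rewrite actM; apply: hImg; apply: mem_nth.
pose phi (s : S) (m : M) := beta (ainv alpha (act s m)).
have hphi : SHom_on act (in_right_ideal gens) phi.
  split.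
  - move=> s hs' a u v; rewrite /phi (act_lin s) (ainv_lin hal hinj); [exact: (hbe a) | exact: hImgI hs' | exact: hImgI hs'].
  - move=> s t m hs' ht; rewrite /phi actD (ainvD hal hinj); [exact: (linD hbe) | exact: hImgI hs' | exact: hImgI ht].
  - by move=> s t m _; rewrite /phi actM.
have [psi [hpl hpd hpm] hpe] := hfi gens phi hphi.
exists (psi 1); split; first exact: hpl.
apply: (decomp_ext hal hbe hp hs); first exact: hpl.
move=> i m; rewrite -hpm // mul1r hpe; last by apply: ideal_mem; apply: map_f; rewrite mem_enum.
by rewrite /phi hs (ainvE hinj).
Qed.

Lemma eb : Hom_injective act A -> class_E M A.
Proof.
move=> hi N alpha beta [I [p hp]] hal hinj hbe.
have [sigma hs] := sigma_ex hal hp.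
pose P (s : (S^c)^o) := forall m, Img alpha (act s m).
have P0 : P 0 by move=> m; rewrite act0s; apply: (Img0 hal).
have PD : forall x y, P x -> P y -> P (x + y).
  by move=> x y hx hy m; rewrite actD; apply: (ImgD hal).
have PZ : forall (a : S^c) x, P x -> P (a *: x) by move=> a x hx m; rewrite regZ actM.
pose JQ := @SubMod _ _ P P0 PD PZ.
pose X := subT JQ.
pose h (x : X) (m : M) := beta (ainv alpha (act (val x) m)).
have hX (x : X) m : Img alpha (act (val x) m) by exact: (asboolW (valP x)).
have hh : SHom act h.
  split.
  - move=> x a u v; rewrite /h (act_lin _) (ainv_lin hal hinj); [exact: (hbe a) | exact: hX | exact: hX].
  - move=> x y m; rewrite /h.
    have -> : val (x + y) = val x + val y by [].
    rewrite actD (ainvD hal hinj); [exact: (linD hbe) | exact: hX | exact: hX].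
  - move=> s x m; rewrite /h.
    by rewrite -actM.
have hv : linear (val : X -> (S^c)^o) by [].
have [k hk hke] := hi X ((S^c)^o) val h hv val_inj hh.
case: hk => kl kd km.
exists (k 1); split; first exact: kl.
apply: (decomp_ext hal hbe hp hs); first exact: kl.
move=> i m.
have Ps : P (sigma i) by move=> m'; rewrite hs; exists (p (delta i m')).
pose xs : X := exist _ (sigma i) (asboolT Ps).
rewrite -km.
have -> : (sigma i : S^c) *: (1 : (S^c)^o) = val xs by rewrite regZ mul1r.
by rewrite hke /h /= hs (ainvE hinj).
Qed.

Lemma ff : class_F M A -> Hom_f_injective act A.
Proof.
move=> hcF gens phi hphi.
have [g [hgl hge]] : exists g : M -> A, linear g /\
    forall s m, in_right_ideal gens s -> phi s m = g (act s m).
  destruct gens as [|g0 gs]; last by apply: extF.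
  exists (fun _ => 0); split; first by move=> a u v; rewrite scaler0 addr0.
  move=> s m [c ->]; rewrite big_ord0.
  case: hphi => hl _ hm.
  have := hm 0 0 m (ideal0 _); rewrite mulr0 act0s => ->.
  exact: (lin0 (hl _ (ideal0 _))).
exists (fun s m => g (act s m)).
  split.
  - move=> s _ a u v; by rewrite (act_lin s) (linD hgl) (linZ hgl).
  - by move=> s t m _ _; rewrite actD (linD hgl).
  - by move=> s t m _; rewrite actM.
by move=> s m hs; rewrite hge.
Qed.

Section Baer.
Variables (X Y : lmodType S^c) (g : X -> Y) (h : X -> M -> A)
  (hgl : linear g) (hgi : injective g) (hh : SHom act h).

Definition good (P : Y -> Prop) (k : Y -> M -> A) :=
  [/\ P 0, (forall y z, P y -> P z -> P (y + z)), (forall (a : S^c) y, P y -> P (a *: y)),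
      (forall x, P (g x)) &
      [/\ (forall y, P y -> linear (k y)),
          (forall y z m, P y -> P z -> k (y + z) m = k y m + k z m),
          (forall (s : S) y m, P y -> k ((s : S^c) *: y) m = k y (act s m))
        & (forall x m, k (g x) m = h x m)]].

Definition T := {pk : (Y -> Prop) * (Y -> M -> A) | good pk.1 pk.2}.
Definition le (a b : T) := (forall y, (sval a).1 y -> (sval b).1 y) /\
  (forall y m, (sval a).1 y -> (sval a).2 y m = (sval b).2 y m).
Definition Rl : rel T := fun a b => `[< le a b >].

Definition P0 (y : Y) := exists x, y = g x.
Definition ginv (y : Y) : X := if pselect (P0 y) is left hy then projT1 (cid hy) else 0.
Lemma ginvK y : P0 y -> y = g (ginv y).
Proof. by rewrite /ginv; case: pselect => // hy _; exact: (projT2 (cid hy)). Qed.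
Lemma ginvE x : ginv (g x) = x.
Proof. by apply: hgi; rewrite -ginvK //; exists x. Qed.

Lemma good0 : good P0 (fun y => h (ginv y)).
Proof.
case: hh => hl hd hm.
split.
- by exists 0; rewrite (lin0 hgl).
- by move=> y z [x1 ->] [x2 ->]; exists (x1 + x2); rewrite (linD hgl).
- by move=> a y [x1 ->]; exists (a *: x1); rewrite (linZ hgl).
- by move=> x; exists x.
split.
- by move=> y _; apply: hl.
- by move=> y z m [x1 ->] [x2 ->]; rewrite -(linD hgl) !ginvE hd.
- by move=> s y m [x1 ->]; rewrite -(linZ hgl) !ginvE hm.
- by move=> x m; rewrite ginvE.
Qed.

Definition t0 : T := exist _ (P0, fun y => h (ginv y)) good0.

Lemma Rl_refl : forall t, Rl t t.
Proof. by move=> t; apply/asboolP; split. Qed.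

Lemma Rl_trans : forall r s t, Rl r s -> Rl s t -> Rl r t.
Proof.
move=> r s t /asboolP [h1 h2] /asboolP [h3 h4]; apply/asboolP; split.
- by move=> y /h1 /h3.
- by move=> y m hy; rewrite h2 // h4 //; apply: h1.
Qed.

Section Chain.
Variables (Ch : set T) (tot : total_on Ch Rl) (a0 : T) (Ha0 : Ch a0).
Definition PU (y : Y) := exists a, Ch a /\ (sval a).1 y.
Definition pick (y : Y) : T := if pselect (PU y) is left hy then projT1 (cid hy) else a0.
Definition kU (y : Y) (m : M) : A := (sval (pick y)).2 y m.

Lemma kU_E a y m : Ch a -> (sval a).1 y -> kU y m = (sval a).2 y m.
Proof.
move=> ha hy; have hU : PU y by exists a.
rewrite /kU /pick; case: pselect => // hy'.
case: (projT2 (cid hy')) => hb hyb.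
case: (tot ha hb) => /asboolP [h1 h2].
- by rewrite h2.
- by rewrite h2.
Qed.

Lemma common y z : PU y -> PU z -> exists c, [/\ Ch c, (sval c).1 y & (sval c).1 z].
Proof.
move=> [a [ha hy]] [b [hb hz]].
case: (tot ha hb) => /asboolP [h1 h2].
- by exists b; split => //; apply: h1.
- by exists a; split => //; apply: h1.
Qed.

Lemma goodU : good PU kU.
Proof.
have gd : forall a : T, good (sval a).1 (sval a).2 by move=> [[P k] hpk].
split.
- by exists a0; split => //; case: (gd a0).
- move=> y z hy hz; have [c [hc h1 h2]] := common hy hz.
  by exists c; split => //; case: (gd c) => _ hD _ _ _; apply: hD.
- move=> a y [b [hb hy]]; exists b; split => //.
  by case: (gd b) => _ _ hZ _ _; apply: hZ.
- by move=> x; exists a0; split => //; case: (gd a0).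
split.
- move=> y [a [ha hy]] r u v.
  rewrite !(kU_E _ ha hy).
  by case: (gd a) => _ _ _ _ [hl _ _ _]; apply: hl.
- move=> y z m hy hz; have [c [hc h1 h2]] := common hy hz.
  case: (gd c) => _ hD _ _ [_ hd _ _].
  by rewrite !(kU_E _ hc) //; [apply: hd | apply: hD].
- move=> s y m [a [ha hy]].
  case: (gd a) => _ _ hZ _ [_ _ hm _].
  by rewrite !(kU_E _ ha) //; [apply: hm | apply: hZ].
- move=> x m; case: (gd a0) => _ _ _ hg [_ _ _ hk].
  by rewrite (kU_E _ Ha0) ?hk.
Qed.

Definition tU : T := exist _ (PU, kU) goodU.
Lemma tU_ub : forall s, Ch s -> Rl s tU.
Proof.
move=> s hs; apply/asboolP; split.
- by move=> y hy; exists s.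
- by move=> y m hy; rewrite /= (kU_E _ hs hy).
Qed.
End Chain.

Lemma chain_ub : forall Ch : set T, total_on Ch Rl -> exists t, forall s, Ch s -> Rl s t.
Proof.
move=> Ch tot; case: (pselect (exists a, Ch a)) => [[a0 Ha0]|hn].
- by exists (tU tot Ha0); apply: tU_ub.
- by exists t0 => s hs; exfalso; apply: hn; exists s.
Qed.


Lemma baer_ext (hcE : class_E M A) :
  exists2 k : Y -> M -> A, SHom act k & forall x m, k (g x) m = h x m.
Proof.
have [t tmax] := ZL_preorder t0 Rl_refl Rl_trans chain_ub.
case E: t => [[P k] gd]; simpl in gd.
have [gP0 gPD gPZ gPg [gkl gkd gkm gkh]] := gd.
have allP : forall y0, P y0.
  move=> y0; case: (pselect (P y0)) => // hny.
  exfalso.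
  pose J (s : S) := P ((s : S^c) *: y0).
  have J0 : J 0 by rewrite /J scale0r.
  have JD : forall s t, J s -> J t -> J (s + t).
    by move=> s u hs hu; rewrite /J scalerDl; apply: gPD.
  have JMul : forall s t, J s -> J (s * t).
    move=> s u hs; rewrite /J.
    have -> : ((s * u : S) : S^c) *: y0 = (u : S^c) *: ((s : S^c) *: y0) by rewrite scalerA.
    exact: gPZ.
  pose phi (s : S) (m : M) := k ((s : S^c) *: y0) m.
  have hphi : SHom_on act J phi.
    split.
    - by move=> s hs; apply: gkl.
    - by move=> s u m hs hu; rewrite /phi scalerDl gkd.
    - move=> s u m hs; rewrite /phi.
      have -> : ((s * u : S) : S^c) *: y0 = (u : S^c) *: ((s : S^c) *: y0) by rewrite scalerA.
      by rewrite gkm.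
  have [gam [hgam hgame]] := extE hcE J0 JD JMul hphi.
  pose P' (y : Y) := exists ps : Y * S, P ps.1 /\ y = ps.1 + (ps.2 : S^c) *: y0.
  pose rep' (y : Y) : Y * S := if pselect (P' y) is left hy then projT1 (cid hy) else (0, 0).
  pose k' (y : Y) (m : M) := k (rep' y).1 m + gam (act (rep' y).2 m).
  have kN : forall p m, P p -> k (- p) m = - k p m.
    move=> p m hp; rewrite -scaleN1r.
    have -> : (-1 : S^c) = ((-1 : S) : S^c) by [].
    rewrite gkm // actNs act1 (linN (gkl _ hp)) //.
  have PN : forall p, P p -> P (- p) by move=> p hp; rewrite -scaleN1r; apply: gPZ.
  have k'E : forall p s y m, P p -> y = p + (s : S^c) *: y0 -> k' y m = k p m + gam (act s m).
    move=> p s y m hp ey.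
    have hy : P' y by exists (p, s).
    rewrite /k' /rep'; case: pselect => // hy'.
    case: (projT2 (cid hy')); set q := projT1 _ => hq eq.
    have e0 : p + (s : S^c) *: y0 = q.1 + (q.2 : S^c) *: y0 by rewrite -ey -eq.
    have eJ : ((s - q.2 : S) : S^c) *: y0 = q.1 + - p.
      have -> : ((s - q.2 : S) : S^c) *: y0 = (s : S^c) *: y0 - (q.2 : S^c) *: y0.
        by rewrite -scalerBl.
      apply: (addrI p); rewrite addrA e0 addrK [p + _]addrC subrK //.
    have hJ : J (s - q.2) by rewrite /J eJ; apply: gPD => //; apply: PN.
    have := hgame _ m hJ; rewrite /phi eJ.
    move=> e; rewrite gkd in e; [| exact: hq | exact: PN].
    rewrite kN // actBs (linB hgam) in e.
    have e2 : k q.1 m = k p m + (gam (act s m) - gam (act q.2 m)) by rewrite -e addrC subrK.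
    by rewrite e2 -addrA subrK.
  have gd' : good P' k'.
    split.
    - by exists (0, 0); split => //=; rewrite scale0r addr0.
    - move=> y z [[p1 s1] [hp1 ->]] [[p2 s2] [hp2 ->]].
      exists (p1 + p2, s1 + s2); split => /=; first exact: gPD.
      by rewrite scalerDl addrACA.
    - move=> a y [[p1 s1] [hp1 ->]].
      exists (a *: p1, ((a : S^c) * (s1 : S^c) : S^c) : S); split => /=; first exact: gPZ.
      by rewrite scalerDr scalerA.
    - move=> x; exists (g x, 0); split => /=; first exact: gPg.
      by rewrite scale0r addr0.
    split.
    - move=> y [[p1 s1] [hp1 ey]] r u v.
      rewrite !(k'E p1 s1 y) //.
      rewrite (gkl _ hp1) (act_lin s1) (linD hgam) (linZ hgam).
      by rewrite scalerDr addrACA.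
    - move=> y z m [[p1 s1] [hp1 ey]] [[p2 s2] [hp2 ez]].
      rewrite (k'E p1 s1 y) // (k'E p2 s2 z) // (k'E (p1 + p2) (s1 + s2)) /=; last first.
        by rewrite ey ez scalerDl addrACA.
        exact: gPD.
      by rewrite gkd // actD (linD hgam) addrACA.
    - move=> r y m [[p1 s1] [hp1 ey]].
      rewrite (k'E p1 s1 y) // (k'E ((r : S^c) *: p1) ((s1 * r : S))) /=; last first.
        by rewrite ey scalerDr scalerA.
        exact: gPZ.
      by rewrite gkm // actM.
    - move=> x m; rewrite (k'E (g x) 0) /=; last by rewrite scale0r addr0.
        by rewrite gkh act0s (lin0 hgam) addr0.
      exact: gPg.
  pose t' : T := exist _ (P', k') gd'.
  have Rtt' : Rl t t'.
    rewrite E; apply/asboolP; split => /=.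
    - by move=> y hy; exists (y, 0); split => //=; rewrite scale0r addr0.
    - move=> y m hy; rewrite (k'E y 0) //; last by rewrite scale0r addr0.
      by rewrite act0s (lin0 hgam) addr0.
  have := tmax t' Rtt'; rewrite E => /asboolP [hsub _].
  apply: hny; apply: hsub => /=.
  by exists (0, 1); split => //=; rewrite add0r scale1r.
exists k.
  by split => [y|y z m|s y m]; [apply: gkl | apply: gkd | apply: gkm].
exact: gkh.
Qed.

End Baer.

Lemma ee : class_E M A -> Hom_injective act A.
Proof. move=> hcE X Y g h hgl hgi hh; exact: (baer_ext hgl hgi hh hcE). Qed.

End Main.

Theorem mainTheorem17 (R S : pzRingType) (M A : GRing.Lmodule.type R^c)
    (act : S -> M -> M) :
  is_End act -> flat_left act ->
  (class_E M A <-> Hom_injective act A) /\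
  (class_F M A <-> Hom_f_injective act A).
Proof.
move=> hE hflat; split; split.
- exact: ee.
- exact: eb.
- exact: ff.
- exact: fb.
Qed.
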